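(* Let $p\ge1$, let $m\in\mathbb Z$ with $1\le m\le p$, and let $n\in\mathbb Z_{\ge0}$ with $m\ne n$. Then $[v(-m,n),\det\mathbf V_p]=0$ in $U(\mathcal L_r)$.
   Context: Fix an integer $d\ge 2$ and $r\in\mathbb{C}$. Let $\hat{\mathfrak h}$ be the complex Lie algebra with basis $\{v^i(m)\mid 1\le i\le d,\ m\in\mathbb{Z}\}\cup\{\mathbf c\}$ and bracket $[v^i(m),v^j(n)]=\delta_{m+n,0}\delta_{i,j}\,m\,\mathbf c$, $[\mathbf c,\hat{\mathfrak h}]=0$. In $A=U(\hat{\mathfrak h})/\langle \mathbf c-1\rangle$ let $v^{ij}(m,n)$ be the image of $v^i(m)v^j(n)$; then $v^{ij}(m,n)=v^{ji}(n,m)$ unless $i=j$ and $m=-n$, and $v^{ii}(m,-m)=v^{ii}(-m,m)+m$. Let $\mathcal B=\{v^{ii}(m,n)\mid 1\le i\le d,\ m\le n\}\cup\{v^{ij}(m,n)\mid 1\le i<j\le d,\ m,n\in\mathbb Z\}$; then $\mathcal B\cup\{1\}$ is linearly independent, $\mathcal L:=\mathrm{span}_{\mathbb C}\mathcal B\oplus\mathbb C\subset A$ contains every $v^{ij}(m,n)$ and is closed under $[x,y]=xy-yx$. With $\pi_1,\pi_2$ the projections of $\mathcal L$ onto $\mathrm{span}\,\mathcal B$ and onto $\mathbb C$, $[x,y]_r=\pi_1([x,y])+r\pi_2([x,y])$ is a Lie bracket on $\mathcal L$; call this Lie algebra $\mathcal L_r$; commutators in $U(\mathcal L_r)$ are taken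 with respect to $[\cdot,\cdot]_r$. Write $v(m,n)=v^{11}(m,n)$. The elements $v(-s,-t)$ with $s,t>0$ pairwise commute in $U(\mathcal L_r)$, so the determinant $\det\mathbf V_p=\sum_{\sigma\in\mathfrak S_p}\mathrm{sgn}(\sigma)\prod_{q=1}^p v(-q,-\sigma(q))\in U(\mathcal L_r)$ of the $p\times p$ matrix $\mathbf V_p=(v(-s,-t))_{1\le s,t\le p}$ is well defined. *)

(* Defs.v *)
From mathcomp Require Import all_boot all_algebra all_fingroup.
From mathcomp Require Import reals Rstruct complex.
Set Implicit Arguments. Unset Strict Implicit. Unset Printing Implicit Defensive.
Import GRing.Theory.
Local Open Scope ring_scope.

Definition CC : numClosedFieldType := (Rdefinitions.R)[i].

(* Basis B of span B (ignoring the summand C = span{1}):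
   v^{ij}(m,n) is a basis element iff i < j, or i = j and m <= n
   (indices i, j range over 1..d). *)
Definition isB (i j : nat) (m n : int) : bool := (i < j)%N || ((i == j) && (m <= n)).

(* Normal form in L of the element v^{ij}(m,n) of A:
   returns (i',j',m',n',c) with v^{i'j'}(m',n') in B and
   v^{ij}(m,n) = v^{i'j'}(m',n') + c (c an integer constant in C = span{1}). *)
Definition nf (i j : nat) (m n : int) : nat * nat * int * int * int :=
  if (i < j)%N then (i, j, m, n, 0)
  else if (j < i)%N then (j, i, n, m, 0)
  else if m <= n then (i, i, m, n, 0)
  else (i, i, n, m, if m + n == 0 then m else 0).

Section Img.
Variable (A : algType CC).
(* f : values of a linear map phi : L_r -> A on the basis B
   (f i j m n = phi (v^{ij}(m,n)), only meaningful for isB i j m n),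
   z = phi(1), the image of the central basis vector 1 of L. *)
Variables (f : nat -> nat -> int -> int -> A) (z : A).

(* phi applied to (pi_1(x) + s * pi_2(x)) where x = v^{ij}(m,n) in L.
   With s = 1 this is phi(v^{ij}(m,n)); with s = r it is the image of the
   element pi_1 + r pi_2 used in the bracket [.,.]_r. *)
Definition img (s : CC) (i j : nat) (m n : int) : A :=
  let: (i', j', m', n', c) := nf i j m n in f i' j' m' n' + (s * c%:~R) *: z.

(* [v^i(m), v^k(l)] = delta_{ik} delta_{m+l,0} m in \hat h (with c = 1). *)
Definition sc (i : nat) (m : int) (k : nat) (l : int) : int :=
  if (i == k) && (m + l == 0) then m else 0.

(* phi([v^{ij}(m,n), v^{kl}(m',n')]_r), computed from
   [xy,zw] = [y,z] xw + [y,w] xz + [x,z] wy + [x,w] zy in A. *)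
Definition brr (r : CC) (i j : nat) (m n : int) (k l : nat) (m' n' : int) : A :=
  (img r i l m n') *~ sc j n k m' + (img r i k m m') *~ sc j n l n'
  + (img r l j n' n) *~ sc i m k m' + (img r k j m' n) *~ sc i m l n'.

(* (f, z) defines a Lie algebra homomorphism L_r -> (A, commutator):
   phi is defined on the basis B \cup {1} and extended linearly. *)
Definition lie_hom (d : nat) (r : CC) : Prop :=
  (forall i j k l m n m' n',
     (1 <= i <= d)%N -> (1 <= j <= d)%N -> (1 <= k <= d)%N -> (1 <= l <= d)%N ->
     isB i j m n -> isB k l m' n' ->
     f i j m n * f k l m' n' - f k l m' n' * f i j m n = brr r i j m n k l m' n')
  /\ (forall i j m n, (1 <= i <= d)%N -> (1 <= j <= d)%N -> isB i j m n ->
        z * f i j m n - f i j m n * z = 0).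

(* phi(v(m,n)) with v = v^{11}. *)
Definition vv (m n : int) : A := img 1 1 1 m n.

Definition detVp (p : nat) : A :=
  \sum_(s : 'S_p) ((-1) ^+ s : CC) *:
     \prod_(q < p) vv (- (q.+1%:Z)) (- ((s q).+1%:Z)).

End Img.

(* Main.v *)
Require Import Defs.
From mathcomp Require Import all_boot all_algebra all_fingroup.
From mathcomp Require Import reals Rstruct complex.
Import GRing.Theory.
Local Open Scope ring_scope.
From mathcomp Require Import zify.
Import Num.Theory.
Set Implicit Arguments. Unset Strict Implicit. Unset Printing Implicit Defensive.

Lemma prod_rem_comm (R : pzRingType) (I : eqType) (F : I -> R) (r : seq I) x :
  (forall i j, GRing.comm (F i) (F j)) -> x \in r ->
  \prod_(i <- r) F i = F x * \prod_(i <- rem x r) F i.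
Proof.
move=> C; elim: r => [//|y r IH]; rewrite inE /= big_cons.
case: (eqVneq y x) => [-> //|nxy] /=; rewrite ?(negbTE nxy) /=; move=> xr.
by rewrite big_cons IH // !mulrA C.
Qed.

Lemma perm_prod_comm (R : pzRingType) (I : eqType) (F : I -> R) (r1 r2 : seq I) :
  (forall i j, GRing.comm (F i) (F j)) -> perm_eq r1 r2 ->
  \prod_(i <- r1) F i = \prod_(i <- r2) F i.
Proof.
move=> C; elim: r1 r2 => [|x r1 IH] r2 P.
  by move: P; rewrite perm_sym => /perm_nilP ->.
have xr2 : x \in r2 by rewrite -(perm_mem P) mem_head.
rewrite big_cons (prod_rem_comm C xr2) (IH (rem x r2)) //.
by rewrite -(perm_cons x) (permPl P) perm_to_rem.
Qed.

Lemma reindex_prod_comm (R : pzRingType) (I : finType) (F : I -> R) (h : I -> I) :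
  (forall i j, GRing.comm (F i) (F j)) -> bijective h ->
  \prod_(i : I) F (h i) = \prod_(i : I) F i.
Proof.
move=> C hb; rewrite -(big_map h predT F); apply: perm_prod_comm => //.
apply: uniq_perm.
- by rewrite map_inj_uniq ?index_enum_uniq //; apply: bij_inj.
- by rewrite index_enum_uniq.
move=> x; rewrite mem_index_enum; case: hb => g hg gh.
by rewrite -(gh x) map_f // mem_index_enum.
Qed.

Lemma bigD1_comm (R : pzRingType) (I : finType) (F : I -> R) i0 :
  (forall i j, GRing.comm (F i) (F j)) ->
  \prod_(i : I) F i = F i0 * \prod_(i : I | i != i0) F i.
Proof.
move=> C; rewrite (prod_rem_comm C (mem_index_enum i0)).
by rewrite rem_filter ?index_enum_uniq // big_filter.
Qed.

Lemma deriv_prod (R : pzRingType) (I : eqType) (F : I -> R) (y : R) (r : seq I) :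
  uniq r -> (forall i j, GRing.comm (y * F i - F i * y) (F j)) ->
  y * \prod_(i <- r) F i - \prod_(i <- r) F i * y =
  \sum_(i <- r) (y * F i - F i * y) * \prod_(j <- r | j != i) F j.
Proof.
move=> + C; elim: r => [|x r IH] /=; first by rewrite !big_nil mul1r mulr1 subrr.
case/andP=> xr ur; rewrite !big_cons eqxx /=.
have -> : y * (F x * \prod_(i <- r) F i) - F x * \prod_(i <- r) F i * y =
   (y * F x - F x * y) * \prod_(i <- r) F i +
   F x * (y * \prod_(i <- r) F i - \prod_(i <- r) F i * y).
  by rewrite mulrBl mulrBr !mulrA addrA subrK.
rewrite IH // mulr_sumr; congr (_ * _ + _).
  rewrite [RHS]big_seq_cond [LHS]big_seq_cond; apply: eq_bigl => j.
  by case: (boolP (j \in r)) => //= jr; apply/esym; apply: contraNneq xr => <-.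
apply: eq_big_seq => i ir.
rewrite big_cons.
have -> : (x != i) by apply: contraNneq xr => ->.
by rewrite mulrA -C mulrA.
Qed.

Lemma img_neg (A : algType CC) (f : nat -> nat -> int -> int -> A) z s (a b : int) :
  a + b != 0 -> img f z s 1 1 a b = if a <= b then f 1 1 a b else f 1 1 b a.
Proof. by move=> H; rewrite /img /nf /=; case: ifP => _; rewrite ?(negbTE H) mulr0 scale0r addr0. Qed.

Definition W (A : algType CC) (f : nat -> nat -> int -> int -> A) z (s t : nat) : A :=
  vv f z (- (s%:Z)) (- (t%:Z)).

Lemma negsum (a b : int) : a < 0 -> b < 0 -> (a + b == 0) = false.
Proof. move=> ha hb; apply/negbTE; lia. Qed.

Lemma W_eq (A : algType CC) (f : nat -> nat -> int -> int -> A) z s t :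
  (0 < s)%N -> (0 < t)%N ->
  W f z s t = if (t <= s)%N then f 1 1 (- (s%:Z)) (- (t%:Z)) else f 1 1 (- (t%:Z)) (- (s%:Z)).
Proof.
move=> hs ht; rewrite /W /vv img_neg; last by rewrite negsum //; lia.
have -> : (- (s%:Z) <= - (t%:Z)) = (t <= s)%N by rewrite lerN2 lez_nat.
by [].
Qed.

Lemma W_sym (A : algType CC) (f : nat -> nat -> int -> int -> A) z s t :
  (0 < s)%N -> (0 < t)%N -> W f z s t = W f z t s.
Proof.
move=> hs ht; rewrite !W_eq //; case: (ltngtP s t) => [h|h|->] //.

Qed.

Lemma one_le (d : nat) : (2 <= d)%N -> (1 <= 1 <= d)%N.
Proof. by move=> h; rewrite leqnn /= ltnW. Qed.

Lemma isB11 (a b : int) : a <= b -> isB 1 1 a b.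
Proof. by move=> h; rewrite /isB ltnn eqxx /= h. Qed.

Lemma fcomm (A : algType CC) (f : nat -> nat -> int -> int -> A) z d r (a b a' b' : int) :
  (2 <= d)%N -> lie_hom f z d r -> a <= b -> b < 0 -> a' <= b' -> b' < 0 ->
  GRing.comm (f 1 1 a b) (f 1 1 a' b').
Proof.
move=> hd [H _] h1 h2 h3 h4.
have := H 1 1 1 1 a b a' b' (one_le hd) (one_le hd) (one_le hd) (one_le hd)
  (isB11 h1) (isB11 h3).
rewrite /brr /sc eqxx /= !negsum //; try lia.
by rewrite !mulr0z !addr0 => /eqP; rewrite subr_eq0 => /eqP.
Qed.

Lemma Wcomm (A : algType CC) (f : nat -> nat -> int -> int -> A) z d r s t s' t' :
  (2 <= d)%N -> lie_hom f z d r -> (0 < s)%N -> (0 < t)%N -> (0 < s')%N -> (0 < t')%N ->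
  GRing.comm (W f z s t) (W f z s' t').
Proof.
move=> hd H *; rewrite !W_eq //.
by case: ifP => h1; case: ifP => h2; apply: fcomm hd H _ _ _ _; lia.
Qed.

Lemma Yeq (A : algType CC) (f : nat -> nat -> int -> int -> A) z (m n : nat) :
  (0 < m)%N -> m <> n -> vv f z (- (m%:Z)) n%:Z = f 1 1 (- (m%:Z)) n%:Z.
Proof.
move=> hm hmn; rewrite /vv img_neg; last by apply/eqP; lia.
by have -> : - (m%:Z) <= n%:Z by lia.
Qed.

Lemma cond_eq (n s : nat) : (n%:Z + - (s%:Z) == 0) = (n == s).
Proof. by rewrite addr_eq0 opprK eqz_nat. Qed.

Lemma Ygen (A : algType CC) (f : nat -> nat -> int -> int -> A) z d r (m n : nat) (a b : int) :
  (2 <= d)%N -> lie_hom f z d r -> (0 < m)%N -> a <= b -> b < 0 ->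
  f 1 1 (- (m%:Z)) n%:Z * f 1 1 a b - f 1 1 a b * f 1 1 (- (m%:Z)) n%:Z =
  img f z r 1 1 (- (m%:Z)) b *~ (if n%:Z + a == 0 then n%:Z else 0)
  + img f z r 1 1 (- (m%:Z)) a *~ (if n%:Z + b == 0 then n%:Z else 0).
Proof.
move=> hd [H _] hm h1 h2.
have hy : - (m%:Z) <= n%:Z by lia.
rewrite (H 1 1 1 1 _ _ a b (one_le hd) (one_le hd) (one_le hd) (one_le hd)
  (isB11 hy) (isB11 h1)).
have e1 := negsum (a := - (m%:Z)) (b := a); have e2 := negsum (a := - (m%:Z)) (b := b).
rewrite /brr /sc eqxx /= e1 ?e2; try lia.
by rewrite !mulr0z !addr0.
Qed.

Lemma Wy (A : algType CC) (f : nat -> nat -> int -> int -> A) z d r (m n s t : nat) :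
  (2 <= d)%N -> lie_hom f z d r -> (0 < m)%N -> m <> n -> (0 < s)%N -> (0 < t)%N ->
  vv f z (- (m%:Z)) n%:Z * W f z s t - W f z s t * vv f z (- (m%:Z)) n%:Z =
  W f z m t *~ (if n == s then n%:Z else 0) + W f z m s *~ (if n == t then n%:Z else 0).
Proof.
move=> hd H hm hmn hs ht; rewrite Yeq // [W f z s t]W_eq //.
case: ifP => hts.
  rewrite (Ygen _ hd H) //; try lia.
  rewrite !cond_eq /W /vv !img_neg //; apply/eqP; lia.
rewrite (Ygen _ hd H) //; try lia.
rewrite !cond_eq /W /vv !img_neg 1?addrC //; apply/eqP; lia.
Qed.

Lemma half (A : lmodType CC) (x : A) : x = - x -> x = 0.
Proof.
move=> h; have h2 : (2%:R : CC) *: x = 0 by rewrite scaler_nat mulr2n {1}h addNr.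
have n2 : (2%:R : CC) != 0 by rewrite pnatr_eq0.
by rewrite -[x]scale1r -(mulVf n2) -scalerA h2 scaler0.
Qed.

Lemma sgn_tperm p (s : 'S_p) (i k : 'I_p) : i != k ->
  ((-1) ^+ (s * tperm i k)%g : CC) = - (-1) ^+ s.
Proof. by move=> ik; rewrite odd_permM odd_tperm ik signr_addb mulrN1. Qed.

Lemma sgn_tperml p (s : 'S_p) (i k : 'I_p) : i != k ->
  ((-1) ^+ (tperm i k * s)%g : CC) = - (-1) ^+ s.
Proof. by move=> ik; rewrite odd_permM odd_tperm ik signr_addb mulNr mul1r. Qed.

Lemma alt_cols (A : algType CC) p (M : 'I_p -> 'I_p -> A) (i k : 'I_p) :
  i != k -> (forall j l, M j (tperm i k l) = M j l) ->
  \sum_(s : 'S_p) ((-1) ^+ s : CC) *: \prod_(j < p) M j (s j) = 0.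
Proof.
move=> ik hM; apply: half.
rewrite {1}(reindex_inj (mulIg (tperm i k))) /= -sumrN; apply: eq_bigr => s _.
rewrite sgn_tperm // scaleNr; congr (- (_ *: _)); apply: eq_bigr => j _.
by rewrite permM hM.
Qed.

Lemma alt_rows (A : algType CC) p (M : 'I_p -> 'I_p -> A) (i k : 'I_p) :
  i != k -> (forall j l, M (tperm i k j) l = M j l) ->
  (forall a b c e, GRing.comm (M a b) (M c e)) ->
  \sum_(s : 'S_p) ((-1) ^+ s : CC) *: \prod_(j < p) M j (s j) = 0.
Proof.
move=> ik hM C; apply: half.
rewrite {1}(reindex_inj (mulgI (tperm i k))) /= -sumrN; apply: eq_bigr => s _.
rewrite sgn_tperml // scaleNr; congr (- (_ *: _)).
rewrite -(reindex_prod_comm (F := fun j => M j (s j)) (h := tperm i k)).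
- by apply: eq_bigr => j _; rewrite permM hM.
- by move=> a b; apply: C.
- by exists (tperm i k) => x; rewrite tpermK.
Qed.

Lemma deriv_prod_fin (R : pzRingType) (I : finType) (F : I -> R) (y : R) :
  (forall i j, GRing.comm (y * F i - F i * y) (F j)) ->
  y * \prod_(i : I) F i - \prod_(i : I) F i * y =
  \sum_(i : I) (y * F i - F i * y) * \prod_(j : I | j != i) F j.
Proof. by move=> C; apply: deriv_prod; rewrite ?index_enum_uniq. Qed.

Lemma comm_lin (R : pzRingType) (a b c : R) (k l : int) :
  GRing.comm a c -> GRing.comm b c -> GRing.comm (a *~ k + b *~ l) c.
Proof.
rewrite /GRing.comm => h1 h2.
by rewrite mulrDl mulrDr !mulrzAl !mulrzAr h1 h2.
Qed.

Unset Implicit Arguments. Set Strict Implicit.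
Theorem lemma6p2 (d : nat) (r : CC) (p m n : nat) :
  (2 <= d)%N -> (1 <= p)%N -> (1 <= m <= p)%N -> m <> n ->
  forall (A : algType CC) (f : nat -> nat -> int -> int -> A) (z : A),
    lie_hom f z d r ->
    vv f z (- (m%:Z)) n%:Z * detVp f z p - detVp f z p * vv f z (- (m%:Z)) n%:Z = 0.
Proof.
move=> hd hp /andP[hm hmp] hmn A f z H.
set y := vv f z (- (m%:Z)) n%:Z.
have Wc : forall s t s' t', (0 < s)%N -> (0 < t)%N -> (0 < s')%N -> (0 < t')%N ->
   GRing.comm (W f z s t) (W f z s' t') by move=> *; apply: (Wcomm hd H).
have key : forall s : 'S_p,
  y * \prod_(q < p) W f z q.+1 (s q).+1 - \prod_(q < p) W f z q.+1 (s q).+1 * y =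
  \sum_(q < p) (W f z m (s q).+1 *~ (if n == q.+1 then n%:Z else 0)
               + W f z m q.+1 *~ (if n == (s q).+1 then n%:Z else 0))
     * \prod_(j < p | j != q) W f z j.+1 (s j).+1.
  move=> s; rewrite deriv_prod_fin.
    by apply: eq_bigr => q _; rewrite /y (Wy hd H).
  by move=> i j; rewrite /y (Wy hd H) //; apply: comm_lin; apply: Wc.
rewrite /detVp mulr_sumr mulr_suml -sumrB.
under eq_bigr do rewrite -scalerAr -scalerAl -scalerBr.
under eq_bigr do rewrite key.
under eq_bigr do under eq_bigr do rewrite mulrDl.
under eq_bigr do rewrite big_split scalerDr.
rewrite big_split /=.
case: (boolP (0 < n <= p)%N) => [/andP[n0 np] | hno]; last first.
  have hout : forall q : 'I_p, n != q.+1.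
    by move=> q; apply/eqP => e; move: hno; rewrite e ltn_ord.
  rewrite !big1 ?addr0 // => s _; rewrite big1 ?scaler0 // => q _.
    by rewrite (negbTE (hout (s q))) mulr0z mul0r.
  by rewrite (negbTE (hout q)) mulr0z mul0r.
have hn1 : (n.-1 < p)%N by lia.
pose N : 'I_p := Ordinal hn1.
have hN : n = N.+1 by rewrite /= prednK.
have hm1 : (m.-1 < p)%N by lia.
pose M0 : 'I_p := Ordinal hm1.
have hM0 : m = M0.+1 by rewrite /= prednK.
have NM : N != M0 by apply/eqP => e; apply: hmn; rewrite hN hM0 e.
clearbody N M0.
pose M1 (j k : 'I_p) := if j == N then W f z m k.+1 else W f z j.+1 k.+1.
pose M2 (j k : 'I_p) := if k == N then W f z m j.+1 else W f z j.+1 k.+1.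
have M1c : forall a b c e, GRing.comm (M1 a b) (M1 c e).
  by move=> a b c e; rewrite /M1; do 2 case: ifP => _; apply: Wc; lia.
have M2c : forall a b c e, GRing.comm (M2 a b) (M2 c e).
  by move=> a b c e; rewrite /M2; do 2 case: ifP => _; apply: Wc; lia.
have hq : forall q : 'I_p, (n == q.+1) = (q == N).
  by move=> q; rewrite hN eqSS eq_sym.
have e1 : forall s : 'S_p,
  \sum_(q < p) W f z m (s q).+1 *~ (if n == q.+1 then n%:Z else 0) *
        \prod_(j < p | j != q) W f z j.+1 (s j).+1
  = (\prod_(j < p) M1 j (s j)) *~ n%:Z.
  move=> s; rewrite (bigD1 N) //= hq eqxx [X in _ + X]big1 ?addr0 => [|q qN]; last first.
    by rewrite hq (negbTE qN) mulr0z mul0r.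
  rewrite (bigD1_comm N); last by move=> a b; apply: M1c.
  rewrite /M1 eqxx -mulrzAl; congr (_ * _); apply: eq_bigr => j jN.
  by rewrite (negbTE jN).
have e2 : forall s : 'S_p,
  \sum_(q < p) W f z m q.+1 *~ (if n == (s q).+1 then n%:Z else 0) *
        \prod_(j < p | j != q) W f z j.+1 (s j).+1
  = (\prod_(j < p) M2 j (s j)) *~ n%:Z.
  move=> s; pose q0 := (s^-1)%g N.
  have sq0 : s q0 = N by rewrite /q0 permKV.
  have hq' : forall q : 'I_p, (n == (s q).+1) = (q == q0).
    by move=> q; rewrite hq -{1}sq0 (inj_eq perm_inj).
  rewrite (bigD1 q0) //= hq' eqxx [X in _ + X]big1 ?addr0 => [|q qN]; last first.
    by rewrite hq' (negbTE qN) mulr0z mul0r.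
  rewrite (bigD1_comm q0); last by move=> a b; apply: M2c.
  rewrite /M2 sq0 eqxx -mulrzAl; congr (_ * _); apply: eq_bigr => j jN.
  by rewrite -{1}sq0 (inj_eq perm_inj) (negbTE jN).
under eq_bigr do rewrite e1 -scalerMzr.
under [X in _ + X]eq_bigr do rewrite e2 -scalerMzr.
rewrite -!mulrz_suml (alt_rows (i := N) (k := M0)) ?(alt_cols (i := N) (k := M0)) ?mul0rz ?addr0 //.
- have MN : (M0 == N) = false by apply/negbTE; rewrite eq_sym.
  move=> j l; case: tpermP => [->|->|//].
    by rewrite /M2 eqxx MN -hM0 W_sym.
  by rewrite /M2 eqxx MN -hM0 W_sym.
- have MN : (M0 == N) = false by apply/negbTE; rewrite eq_sym.
  move=> j l; case: tpermP => [->|->|//].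
    by rewrite /M1 eqxx MN -hM0.
  by rewrite /M1 eqxx MN -hM0.
Qed.
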